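(* Let $\phi:A\to B$ be a surjective ring homomorphism. If $A$ is a Prüfer ring and $\mathrm{Ker}(\phi)$ is a regular ideal of $A$, then $\mathfrak a(\mathfrak b\cap\mathfrak c)=\mathfrak a\mathfrak b\cap\mathfrak a\mathfrak c$ for all ideals $\mathfrak a,\mathfrak b,\mathfrak c$ of $B$. In particular, $B$ is a Prüfer ring.
   Context: All rings are commutative with identity. An ideal is regular if it contains a non-zerodivisor. A ring is a Prüfer ring if every regular finitely generated ideal is invertible. *)

(* Defs.v *)
(* Commutative rings with identity (possibly the zero ring):
   comPzRingType. Ideals are represented as predicates R -> Prop. *)
From HB Require Import structures.
From mathcomp Require Import all_boot all_order all_algebra.
Set Implicit Arguments. Unset Strict Implicit. Unset Printing Implicit Defensive.
Import GRing.Theory.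
Local Open Scope ring_scope.

Section IdealDefs.
Variable R : comPzRingType.

Definition is_ideal (I : R -> Prop) : Prop :=
  [/\ I 0, (forall x y, I x -> I y -> I (x + y))
         & (forall r x, I x -> I (r * x))].

Definition ideal_mul (I J : R -> Prop) : R -> Prop :=
  fun x => exists (n : nat) (a b : 'I_n -> R),
    [/\ (forall k, I (a k)), (forall k, J (b k)) & x = \sum_(k < n) a k * b k].

Definition ideal_cap (I J : R -> Prop) : R -> Prop := fun x => I x /\ J x.

Definition ideal_eq (I J : R -> Prop) : Prop := forall x, I x <-> J x.

Definition regular_elt (x : R) : Prop := forall y, x * y = 0 -> y = 0.

Definition regular_ideal (I : R -> Prop) : Prop := exists x, I x /\ regular_elt x.

Definition fin_gen (I : R -> Prop) : Prop :=
  exists (n : nat) (g : 'I_n -> R),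
    forall x, I x <-> exists c : 'I_n -> R, x = \sum_(k < n) c k * g k.

(* Invertibility: I (R : I) = R in the total ring of fractions Q(R), where
   (R : I) = { q in Q(R) | q I ⊆ R }.  Written out inside R: an element of
   (R : I) is a fraction a/s with s regular and s | a*j for all j in I; since
   I (R : I) ⊆ R always, I (R : I) = R iff 1 is a finite sum of products
   i_k * (a_k/s_k) with i_k in I, a_k/s_k in (R : I); each such product is the
   (unique, s_k regular) element r_k of R with s_k r_k = i_k a_k. *)
Definition invertible_ideal (I : R -> Prop) : Prop :=
  exists (n : nat) (i a s r : 'I_n -> R),
    [/\ (forall k, I (i k)),
        (forall k, regular_elt (s k)),
        (forall k j, I j -> exists t, a k * j = s k * t),
        (forall k, s k * r k = i k * a k)
      & \sum_(k < n) r k = 1].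

Definition prufer : Prop :=
  forall I : R -> Prop, is_ideal I -> fin_gen I -> regular_ideal I ->
    invertible_ideal I.

End IdealDefs.

Definition ker (A B : comPzRingType) (phi : {rmorphism A -> B}) : A -> Prop :=
  fun x => phi x = 0.

(* Main.v *)
Require Import Defs.
From mathcomp Require Import all_boot all_order all_algebra.
Set Implicit Arguments. Unset Strict Implicit. Unset Printing Implicit Defensive.
Import GRing.Theory.
Local Open Scope ring_scope.

Definition cat_fam (R : Type) (p q : nat) (f : 'I_p -> R) (g : 'I_q -> R)
  (k : 'I_(p + q)) : R :=
  match split k with inl i => f i | inr j => g j end.

Lemma cat_famL (R : Type) p q (f : 'I_p -> R) (g : 'I_q -> R) i :
  cat_fam f g (lshift q i) = f i.
Proof. by rewrite /cat_fam (unsplitK (inl _ i)). Qed.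

Lemma cat_famR (R : Type) p q (f : 'I_p -> R) (g : 'I_q -> R) j :
  cat_fam f g (rshift p j) = g j.
Proof. by rewrite /cat_fam (unsplitK (inr _ j)). Qed.

Section Gen.
Variable R : comPzRingType.

Lemma reg_cancel (x a b : R) : regular_elt x -> x * a = x * b -> a = b.
Proof.
move=> rx e; apply/eqP; rewrite -subr_eq0; apply/eqP; apply: rx.
by rewrite mulrBr e subrr.
Qed.

Lemma ideal_mul0 (I J : R -> Prop) : ideal_mul I J 0.
Proof.
exists 0%N, (fun _ => 0), (fun _ => 0); split => //; try by case.
by rewrite big_ord0.
Qed.

Lemma ideal_mulD (I J : R -> Prop) x y :
  ideal_mul I J x -> ideal_mul I J y -> ideal_mul I J (x + y).
Proof.
move=> [n [a [b [Ha Hb ->]]]] [m [a' [b' [Ha' Hb' ->]]]].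
exists (n + m)%N, (cat_fam a a'), (cat_fam b b'); split.
- by move=> k; rewrite /cat_fam; case: split.
- by move=> k; rewrite /cat_fam; case: split.
rewrite (big_split_ord _ xpredT) /=; congr (_ + _); apply: eq_bigr => i _.
  by rewrite !cat_famL.
by rewrite !cat_famR.
Qed.

Lemma ideal_mul_sum (I J : R -> Prop) n (F : 'I_n -> R) :
  (forall k, ideal_mul I J (F k)) -> ideal_mul I J (\sum_(k < n) F k).
Proof.
move=> H; apply: (big_ind (ideal_mul I J)) => //.
  exact: ideal_mul0.
by move=> ? ? ; apply: ideal_mulD.
Qed.

Lemma ideal_sum (I : R -> Prop) n (F : 'I_n -> R) :
  is_ideal I -> (forall k, I (F k)) -> I (\sum_(k < n) F k).
Proof.
case=> H0 HD HM H; apply: (big_ind I) => //.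
Qed.

Definition span n (h : 'I_n -> R) : R -> Prop :=
  fun x => exists c : 'I_n -> R, x = \sum_(k < n) c k * h k.

Lemma span_ideal n (h : 'I_n -> R) : is_ideal (span h).
Proof.
split.
- by exists (fun _ => 0); rewrite big1 // => k _; rewrite mul0r.
- move=> x y [c ->] [d ->]; exists (fun k => c k + d k).
  by rewrite -big_split /=; apply: eq_bigr => k _; rewrite mulrDl.
- move=> r x [c ->]; exists (fun k => r * c k).
  by rewrite mulr_sumr; apply: eq_bigr => k _; rewrite mulrA.
Qed.

Lemma span_gen n (h : 'I_n -> R) l : span h (h l).
Proof.
exists (fun k => if k == l then 1 else 0).
rewrite (bigD1 l) //= eqxx mul1r big1 ?addr0 // => k /negbTE ->.
by rewrite mul0r.
Qed.

Lemma prufer_fam n (h : 'I_n -> R) k0 :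
  prufer R -> regular_elt (h k0) ->
  exists T : 'I_n -> 'I_n -> R,
    \sum_(l < n) T l l = 1 /\
    (forall l j m, T l j * h m = T l m * h j).
Proof.
move=> PR rk.
have [N [i [a [s [r [Hi Hs Ha Hr Hsum]]]]]] :
  invertible_ideal (span h).
  apply: PR; first exact: span_ideal.
    by exists n, h => x; split.
  by exists (h k0); split => //; apply: span_gen.
have [c Hc] : exists c : 'I_N -> 'I_n -> R,
    forall kk, i kk = \sum_(l < n) c kk l * h l.
  apply: (@fin_all_exists _ (fun _ => 'I_n -> R)
    (fun kk c => i kk = \sum_(l < n) c l * h l)) => kk.
  by case: (Hi kk) => c ->; exists c.
have [t Ht] : exists t : 'I_N -> 'I_n -> R,
    forall kk l, a kk * h l = s kk * t kk l.
  apply: (@fin_all_exists _ (fun _ => 'I_n -> R)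
    (fun kk t => forall l, a kk * h l = s kk * t l)) => kk.
  apply: (@fin_all_exists _ (fun _ => R)
    (fun l t => a kk * h l = s kk * t)) => l.
  exact: Ha (span_gen h l).
have Hrel : forall kk l j, t kk l * h j = t kk j * h l.
  move=> kk l j; apply: (@reg_cancel (s kk)) => //.
  by rewrite !mulrA -!Ht mulrAC.
have Hr' : forall kk, r kk = \sum_(l < n) c kk l * t kk l.
  move=> kk; apply: (@reg_cancel (s kk)) => //.
  rewrite Hr Hc mulr_suml mulr_sumr; apply: eq_bigr => l _.
  by rewrite -mulrA (mulrC (h l)) Ht mulrCA.
exists (fun l j => \sum_(kk < N) c kk l * t kk j); split.
  rewrite exchange_big /= -Hsum; apply: eq_bigr => kk _; by rewrite Hr'.
move=> l j m; rewrite !mulr_suml; apply: eq_bigr => kk _.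
by rewrite -!mulrA Hrel.
Qed.

End Gen.
Lemma B_fam (A B : comPzRingType) (phi : {rmorphism A -> B}) :
  (forall y : B, exists x : A, phi x = y) ->
  prufer A ->
  regular_ideal (ker phi) ->
  forall n (g : 'I_n -> B), exists (e0 : B) (T : 'I_n -> 'I_n -> B),
    [/\ e0 + \sum_(l < n) T l l = 1, (forall j, e0 * g j = 0)
      & (forall l j m, T l j * g m = T l m * g j)].
Proof.
move=> surj PA [s [Ks rs]] n g.
have [y Hy] : exists y : 'I_n -> A, forall j, phi (y j) = g j.
  by apply: (@fin_all_exists _ (fun _ => A) (fun j x => phi x = g j)).
pose h (k : 'I_n.+1) := if unlift ord0 k is Some j then y j else s.
have h0 : h ord0 = s by rewrite /h unlift_none.
have hl : forall j, h (lift ord0 j) = y j by move=> j; rewrite /h liftK.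
have rh : regular_elt (h ord0) by rewrite h0.
have [T [Tsum Trel]] := @prufer_fam A _ h ord0 PA rh.
exists (phi (T ord0 ord0)), (fun l j => phi (T (lift ord0 l) (lift ord0 j))).
split.
- by rewrite -(rmorph1 phi) -Tsum rmorph_sum big_ord_recl.
- move=> j; rewrite -Hy -hl -rmorphM Trel rmorphM h0.
  by rewrite /ker in Ks; rewrite Ks mulr0.
- by move=> l j m; rewrite -!Hy -!hl -!rmorphM Trel.
Qed.

Theorem proposition4p4 (A B : comPzRingType) (phi : {rmorphism A -> B}) :
  (forall y : B, exists x : A, phi x = y) ->
  prufer A ->
  regular_ideal (ker phi) ->
  (forall a b c : B -> Prop, is_ideal a -> is_ideal b -> is_ideal c ->
     ideal_eq (ideal_mul a (ideal_cap b c))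
              (ideal_cap (ideal_mul a b) (ideal_mul a c)))
  /\ prufer B.
Proof.
move=> surj PA rK.
have BF := B_fam surj PA rK.
split.
  move=> a b c Ia Ib Ic z; split.
    case=> [n [x [w [Hx Hw ->]]]]; split.
      by exists n, x, w; split => // k; case: (Hw k).
    by exists n, x, w; split => // k; case: (Hw k).
  case=> [[p [al [be [Hal Hbe Hz1]]]] [q [al' [ga [Hal' Hga Hz2]]]]].
  have [e0 [T [Hsum He0 Hrel]]] := BF _ (cat_fam be ga).
  have Ib' := Ib; have Ic' := Ic.
  case: Ib' => Ib0 IbD IbM; case: Ic' => Ic0 IcD IcM.
  rewrite -[z]mul1r -Hsum mulrDl mulr_suml.
  apply: ideal_mulD.
    have -> : e0 * z = 0.
      rewrite Hz1 mulr_sumr big1 // => i _.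
      by rewrite mulrCA -[be i](cat_famL _ ga) He0 mulr0.
    exact: ideal_mul0.
  apply: ideal_mul_sum => l.
  case E: (split l) => [i0|j0].
  -
    have gl : cat_fam be ga l = be i0 by rewrite /cat_fam E.
    rewrite Hz2 mulr_sumr.
    exists q, al', (fun j => T l l * ga j); split => //.
      move=> j; split; last exact: IcM.
      by rewrite -[ga j](cat_famR be) Hrel gl; apply: IbM.
    by apply: eq_bigr => j _; rewrite mulrCA.
  - have gl : cat_fam be ga l = ga j0 by rewrite /cat_fam E.
    rewrite Hz1 mulr_sumr.
    exists p, al, (fun i => T l l * be i); split => //.
      move=> i; split; first exact: IbM.
      by rewrite -[be i](cat_famL _ ga) Hrel gl; apply: IcM.
    by apply: eq_bigr => i _; rewrite mulrCA.
move=> I II [n [g Hg]] [x [Ix rx]].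
have [c Hc] := (Hg x).1 Ix.
have [e0 [T [Hsum He0 Hrel]]] := BF _ g.
have e00 : e0 = 0.
  apply: rx; rewrite mulrC Hc mulr_sumr big1 // => j _.
  by rewrite mulrCA He0 mulr0.
rewrite e00 add0r in Hsum.
exists n, g, (fun l => \sum_(j < n) c j * T l j), (fun _ => x), (fun l => T l l).
split => //.
- by move=> k; apply/Hg; exists (fun j => if j == k then 1 else 0);
    rewrite (bigD1 k) //= eqxx mul1r big1 ?addr0 // => j /negbTE ->; rewrite mul0r.
- move=> l j /Hg [d ->]; exists (\sum_(m < n) d m * T l m).
  rewrite !mulr_sumr; apply: eq_bigr => m _.
  rewrite mulrCA mulr_suml mulrCA; congr (d m * _).
  rewrite Hc mulr_suml; apply: eq_bigr => k _.
  by rewrite -mulrA Hrel (mulrC (T l m)) mulrA.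
- move=> l; rewrite Hc !mulr_sumr mulr_suml; apply: eq_bigr => j _.
  rewrite [RHS]mulrCA [g l * _]mulrC -Hrel.
  by rewrite -mulrA (mulrC (g j)).
Qed.
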